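(* Let $(u,v)\in k(x)^n\times k(x)^m$. There exist circuits $c_u\in\mathsf{ACirc}[0,n]$ and $c_v\in\mathsf{ACirc}[m,0]$ such that $[\![c_u]\!]=\{(\bullet,u)\}$ and $[\![c_v]\!]=\{(v,\bullet)\}$.
   Context: Fix a field $k$; $k(x)$ is the field of fractions of polynomials in $x$ over $k$. Circuits: terms built from generators with sorts $(n,m)$: copier $\Delta:(1,2)$, discard $!:(1,0)$, amplifier $\mathsf{s}_r:(1,1)$ ($r\in k$), register $\mathsf{x}:(1,1)$, adder $+:(2,1)$, zero $0:(0,1)$, one $\mathbf{1}:(0,1)$; mirror images $\Delta^{op}:(2,1)$, $!^{op}:(0,1)$, $\mathsf{s}_r^{op}$, $\mathsf{x}^{op}:(1,1)$, $+^{op}:(1,2)$, $0^{op}:(1,0)$, $\mathbf{1}^{op}:(1,0)$; $\mathrm{id}_0:(0,0),\mathrm{id}_1:(1,1),\mathrm{sw}:(2,2)$; closed under sequential composition $;$ and parallel composition $\oplus$. $\mathsf{ACirc}[n,m]$ is the set of circuits of sort $(n,m)$. Denotation: $[\![\Delta]\!]=\{(p,(p,p))\}$, $[\![!]\!]=\{(p,\bullet)\}$, $[\![+]\!]=\{((p,q),p+q)\}$, $[\![0]\!]=\{(\bullet,0)\}$, $[\![\mathbf 1]\!]=\{(\bullet,1)\}$, $[\![\mathsf s_r]\!]=\{(p,rp)\}$, $[\![\mathsf x]\!]=\{(p,px)\}$ ($\bullet$ the unique element of $k(x)^0$); mirrored generators denote converse relations; $\mathrm{id}_1,\mathrm{sw},\mathrm{id}_0$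 denote identity, swap, $\{(\bullet,\bullet)\}$; $;$ is relational composition and $\oplus$ product of relations. *)

(* Defs.v *)
From HB Require Import structures.
From mathcomp Require Import all_boot all_algebra.
From mathcomp Require Import fraction.
Set Implicit Arguments. Unset Strict Implicit. Unset Printing Implicit Defensive.
Import GRing.Theory.
Local Open Scope ring_scope.

Section Circuits.
Variable k : fieldType.

Definition kx := {fraction {poly k}}.
Definition xF : kx := FracField.tofrac 'X.

Inductive circ : nat -> nat -> Type :=
| Copy : circ 1 2
| Disc : circ 1 0
| Amp (r : k) : circ 1 1
| Reg : circ 1 1
| Add : circ 2 1
| Zero : circ 0 1
| One : circ 0 1
| CopyOp : circ 2 1
| DiscOp : circ 0 1
| AmpOp (r : k) : circ 1 1
| RegOp : circ 1 1
| AddOp : circ 1 2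
| ZeroOp : circ 1 0
| OneOp : circ 1 0
| Id0 : circ 0 0
| Id1 : circ 1 1
| Sw : circ 2 2
| Seq (n m l : nat) : circ n m -> circ m l -> circ n l
| Par (n1 m1 n2 m2 : nat) : circ n1 m1 -> circ n2 m2 -> circ (n1 + n2) (m1 + m2).

Definition ACirc (n m : nat) := circ n m.

(* vectors of k(x)^n are row vectors 'rV[kx]_n; k(x)^0 has a unique element *)
Definition rv1 (p : kx) : 'rV[kx]_1 := \row_(j < 1) p.
Definition rv2 (p q : kx) : 'rV[kx]_2 :=
  \row_(j < 2) (if j == ord0 then p else q).

Definition rel_copy (a : 'rV[kx]_1) (b : 'rV[kx]_2) : Prop :=
  exists p, a = rv1 p /\ b = rv2 p p.
Definition rel_disc (a : 'rV[kx]_1) (b : 'rV[kx]_0) : Prop := True.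
Definition rel_amp (r : k) (a b : 'rV[kx]_1) : Prop :=
  exists p, a = rv1 p /\ b = rv1 (FracField.tofrac (r%:P) * p).
Definition rel_reg (a b : 'rV[kx]_1) : Prop :=
  exists p, a = rv1 p /\ b = rv1 (p * xF).
Definition rel_add (a : 'rV[kx]_2) (b : 'rV[kx]_1) : Prop :=
  exists p q, a = rv2 p q /\ b = rv1 (p + q).
Definition rel_zero (a : 'rV[kx]_0) (b : 'rV[kx]_1) : Prop := b = rv1 0.
Definition rel_one (a : 'rV[kx]_0) (b : 'rV[kx]_1) : Prop := b = rv1 1.
Definition rel_id (n : nat) (a b : 'rV[kx]_n) : Prop := b = a.
Definition rel_sw (a b : 'rV[kx]_2) : Prop :=
  exists p q, a = rv2 p q /\ b = rv2 q p.

Fixpoint sem (n m : nat) (c : circ n m) : 'rV[kx]_n -> 'rV[kx]_m -> Prop :=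
  match c in circ n m return 'rV[kx]_n -> 'rV[kx]_m -> Prop with
  | Copy => rel_copy
  | Disc => rel_disc
  | Amp r => rel_amp r
  | Reg => rel_reg
  | Add => rel_add
  | Zero => rel_zero
  | One => rel_one
  | CopyOp => fun a b => rel_copy b a
  | DiscOp => fun a b => rel_disc b a
  | AmpOp r => fun a b => rel_amp r b a
  | RegOp => fun a b => rel_reg b a
  | AddOp => fun a b => rel_add b a
  | ZeroOp => fun a b => rel_zero b a
  | OneOp => fun a b => rel_one b a
  | Id0 => fun _ _ => True
  | Id1 => @rel_id 1
  | Sw => rel_sw
  | Seq _ _ _ c1 c2 => fun a b => exists w, sem c1 a w /\ sem c2 w b
  | Par _ _ _ _ c1 c2 => fun a b =>
      sem c1 (lsubmx a) (lsubmx b) /\ sem c2 (rsubmx a) (rsubmx b)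
  end.

End Circuits.

(* Main.v *)
Require Import Defs.
From mathcomp Require Import all_boot all_algebra.
From mathcomp Require Import fraction.
From Stdlib Require Import Setoid.
Set Implicit Arguments. Unset Strict Implicit. Unset Printing Implicit Defensive.
Import GRing.Theory.
Local Open Scope ring_scope.

Section Aux.
Local Open Scope quotient_scope.
Lemma frac_decomp (R : idomainType) (f : {fraction R}) :
  exists p q, q != 0 /\ f = (FracField.tofrac p) / (FracField.tofrac q).
Proof.
elim/quotW: f => x.
exists (\n_x), (\d_x); split; first exact: denom_ratioP.
have hd : FracField.tofrac (\d_x) != 0 by rewrite tofrac_eq0 denom_ratioP.
apply: (mulIf hd). rewrite divfK //.
unlock FracField.tofrac.
rewrite -[_ * _]/(FracField.mul _ _).
rewrite -FracField.pi_mul.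
apply/eqmodP => /=.
rewrite FracField.equivfE /FracField.mulf !numden_Ratio ?mulf_neq0 ?oner_neq0 ?denom_ratioP //.
by rewrite !mulr1 mulrC.
Qed.
End Aux.

Section Circ.
Variable k : fieldType.
Local Notation F := (kx k).
Local Notation tf := (@FracField.tofrac {poly k}).

Lemma rv1K (a : 'rV[F]_1) : a = rv1 (a 0 0).
Proof. by apply/rowP => j; rewrite !mxE ord1. Qed.

Lemma rv1E (p : F) : rv1 p 0 0 = p.
Proof. by rewrite mxE. Qed.

Lemma rv1_inj (p q : F) : rv1 p = rv1 q -> p = q.
Proof. by move/(congr1 (fun m : 'rV[F]_1 => m 0 0)); rewrite !mxE. Qed.

Lemma lsub_rv2 (p q : F) : lsubmx (rv2 p q : 'rV[F]_(1+1)) = rv1 p.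
Proof. by apply/rowP => j; rewrite !mxE ord1. Qed.

Lemma rsub_rv2 (p q : F) : rsubmx (rv2 p q : 'rV[F]_(1+1)) = rv1 q.
Proof. by apply/rowP => j; rewrite !mxE ord1. Qed.

Lemma lsub10 (a : 'rV[F]_(1+0)) : lsubmx a = a.
Proof. by apply/rowP => j; rewrite mxE; congr (a _ _); apply: val_inj. Qed.

Lemma mulc (q : {poly k}) : exists c : circ k 1 1,
  forall a b, sem c a b <-> b = rv1 (tf q * a 0 0).
Proof.
elim/poly_ind: q.
  exists (Seq (Disc k) (Zero k)) => a b /=; rewrite /rel_zero rmorph0 mul0r.
  by split => [[w [_ ->]]|->] //; exists 0.
move=> q c [cq Hq].
exists (Seq (Copy k) (Seq (Par (Seq cq (Reg k)) (Amp c)) (Add k))) => a b /=.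
split.
  case=> w [[p [-> ->]] [w2 [[[w3 [H3 [p3 [E3 E4]]]] [p5 [E5 E6]]] [p6 [q6 [E7 ->]]]]]].
  move: H3; rewrite Hq lsub_rv2 rv1E E3 => /rv1_inj G3.
  move: E5; rewrite rsub_rv2 => /rv1_inj G5.
  move: E4 E6; rewrite E7 lsub_rv2 rsub_rv2 => /rv1_inj G4 /rv1_inj G6.
  rewrite G4 G6 G3 -G5.
  rewrite ?rv1E rmorphD rmorphM /= /xF.

  by rewrite mulrDl mulrAC.
move=> ->; set p := a 0 0.
exists (rv2 p p); split; first by exists p; split => //; exact: rv1K.
exists (rv2 (tf q * p * xF k) (tf c%:P * p)); split; last first.
  exists (tf q * p * xF k), (tf c%:P * p); split => //.
  by rewrite rmorphD rmorphM /= /xF mulrDl mulrAC.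
split.
  exists (rv1 (tf q * p)); split; first by rewrite Hq lsub_rv2 rv1E.
  by exists (tf q * p); rewrite lsub_rv2.
by exists p; rewrite rsub_rv2 rsub_rv2.
Qed.

Lemma polyc (p : {poly k}) : exists c : circ k 0 1,
  forall a b, sem c a b <-> b = rv1 (tf p).
Proof.
have [m Hm] := mulc p.
exists (Seq (One k) m) => a b /=; rewrite /rel_one.
split.
  by case=> w [-> ]; rewrite Hm rv1E mulr1.
by move=> ->; exists (rv1 1); split => //; rewrite Hm rv1E mulr1.
Qed.

Lemma chk (f : F) (cf : circ k 0 1) :
  (forall a b, sem cf a b <-> b = rv1 f) ->
  exists c : circ k 1 0, forall a b, sem c a b <-> a = rv1 f.
Proof.
move=> Hf.
exists (Seq (Par (Id1 k) cf) (Seq (CopyOp k) (Disc k))) => a b /=.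
rewrite /rel_id /rel_disc.
split.
  case=> w [[E1 E2] [w' [[p [E3 E4]] _]]].
  move: E2; rewrite Hf E4 rsub_rv2 => /rv1_inj <-.
  by rewrite -(lsub10 a) -E1 E4 lsub_rv2.
move=> Ea; exists (rv2 f f); split; last by exists (rv1 f); split => //; exists f.
by rewrite lsub_rv2 Hf rsub_rv2 lsub10 Ea.
Qed.

Lemma const_any (f : F) : exists c : circ k 0 1,
  forall a b, sem c a b <-> b = rv1 f.
Proof.
have [p [q [q0 ->]]] := frac_decomp f.
have hq : tf q != 0 by rewrite tofrac_eq0.
have [cp Hp] := polyc p.
have [ch Hch] := chk Hp.
have [mq Hmq] := mulc q.
exists (Seq (DiscOp k) (Seq (Copy k) (Par (Id1 k) (Seq mq ch)))) => a b /=.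
rewrite /rel_disc /rel_id.
split.
  case=> w [_ [w2 [[r [E1 E2]] [E3 [w3 [H4 H5]]]]]].
  move: H4; rewrite Hmq E2 rsub_rv2 rv1E => E4.
  move: H5; rewrite Hch E4 => /rv1_inj E5.
  by rewrite -(lsub10 b) E3 E2 lsub_rv2 -E5 [tf q * r]mulrC mulfK.
move=> Eb; set g := tf p / tf q.
exists (rv1 g); split => //.
exists (rv2 g g); split; first by exists g.
split; first by rewrite lsub_rv2 -Eb lsub10.
exists (rv1 (tf q * g)); split; first by rewrite Hmq rsub_rv2 rv1E.
by rewrite Hch /g mulrC divfK.
Qed.

Lemma co_any (f : F) : exists c : circ k 1 0,
  forall a b, sem c a b <-> a = rv1 f.
Proof. have [c Hc] := const_any f; exact: chk Hc. Qed.

Lemma rV_split n (a b : 'rV[F]_(1 + n)) :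
  a = b <-> lsubmx a = lsubmx b /\ rsubmx a = rsubmx b.
Proof.
split; first by move=> ->.
by case=> E1 E2; rewrite -[a]hsubmxK -[b]hsubmxK E1 E2.
Qed.

Lemma vec_const n (u : 'rV[F]_n) : exists c : circ k 0 n,
  forall a b, sem c a b <-> b = u.
Proof.
elim: n u => [|n IH] u.
  by exists (Id0 k) => a b /=; split => // _; rewrite (thinmx0 b) (thinmx0 u).
pose u' : 'rV[F]_(1 + n) := u.
have [c1 H1] := const_any (lsubmx u' 0 0).
have [c2 H2] := IH (rsubmx u').
exists (Par c1 c2) => a b /=.
rewrite H1 H2 (rV_split b u') -(rv1K (lsubmx u')).
by split => [[-> ->]|[-> ->]].
Qed.

Lemma vec_coconst n (u : 'rV[F]_n) : exists c : circ k n 0,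
  forall a b, sem c a b <-> a = u.
Proof.
elim: n u => [|n IH] u.
  by exists (Id0 k) => a b /=; split => // _; rewrite (thinmx0 a) (thinmx0 u).
pose u' : 'rV[F]_(1 + n) := u.
have [c1 H1] := co_any (lsubmx u' 0 0).
have [c2 H2] := IH (rsubmx u').
exists (Par c1 c2) => a b /=.
rewrite H1 H2 (rV_split a u') -(rv1K (lsubmx u')).
by split => [[-> ->]|[-> ->]].
Qed.

End Circ.

Theorem proposition2 (k : fieldType) (n m : nat)
    (u : 'rV[kx k]_n) (v : 'rV[kx k]_m) :
  exists (cu : ACirc k 0 n) (cv : ACirc k m 0),
    (forall (a : 'rV[kx k]_0) (b : 'rV[kx k]_n), sem cu a b <-> b = u) /\
    (forall (a : 'rV[kx k]_m) (b : 'rV[kx k]_0), sem cv a b <-> a = v).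
Proof.
have [cu Hu] := vec_const u.
have [cv Hv] := vec_coconst v.
by exists cu, cv.
Qed.
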